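(* Let $N$ be a smooth positive function on an open interval of $r$-values, let $a$ be a constant such that $F(r)=\int_a^r\frac{1}{N(\mu)}\,\mathrm{d}\mu$ is defined and has a smooth inverse $F^{-1}$ defined on an open interval $I$, and set $b_1(t)=N(F^{-1}(t))$, $b_2(t)=F^{-1}(t)$ for $t\in I$, with $b_2>0$. Consider the $(2+1)$-dimensional Lorentzian multiply warped product $I\times{}_{b_1}F_1\times{}_{b_2}F_2$ with $F_1,F_2$ one-dimensional Riemannian manifolds with coordinates $x,\phi$ and metric $\mathrm{d}s^2=-\mathrm{d}t^2+b_1^2(t)\,\mathrm{d}x^2+b_2^2(t)\,\mathrm{d}\phi^2$. Then this space-time is Einstein with Ricci curvature $\lambda$ if and only if the square lapse function satisfies $N^2(r)=\frac{\lambda}{2}r^2+c_2$ for some constant $c_2$ (that is, $N^2(r)=\frac{\lambda}{2}r^2+c_1r+c_2$ with $c_1=0$).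
   Context: A pseudo-Riemannian manifold $(M,h)$ is Einstein with Ricci curvature $\lambda$ if $\mathrm{Ric}=\lambda h$. *)

(* Defs.v *)
From Stdlib Require Import Reals Lra Arith.
From Coquelicot Require Import Coquelicot.
Open Scope R_scope.

Definition in_oint (lo hi : Rbar) (x : R) : Prop := Rbar_lt lo x /\ Rbar_lt x hi.

Definition smooth_on (J : R -> Prop) (f : R -> R) : Prop :=
  forall (n : nat) (x : R), J x -> ex_derive_n f n x.

(* A point of the chart is p : nat -> R, coordinates p 0, p 1, p 2.
   Indices range over {0,1,2}. *)
Definition pt := nat -> R.

Definition upd (p : pt) (i : nat) (s : R) : pt :=
  fun j => if Nat.eqb j i then s else p j.

Definition pd (i : nat) (f : pt -> R) (p : pt) : R :=
  Derive (fun s => f (upd p i s)) (p i).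

Definition sum3 (f : nat -> R) : R := f 0%nat + f 1%nat + f 2%nat.

Definition metric := nat -> nat -> pt -> R.

Definition det3 (m : nat -> nat -> R) : R :=
  m 0%nat 0%nat * (m 1%nat 1%nat * m 2%nat 2%nat - m 1%nat 2%nat * m 2%nat 1%nat)
  - m 0%nat 1%nat * (m 1%nat 0%nat * m 2%nat 2%nat - m 1%nat 2%nat * m 2%nat 0%nat)
  + m 0%nat 2%nat * (m 1%nat 0%nat * m 2%nat 1%nat - m 1%nat 1%nat * m 2%nat 0%nat).

(* cofactor of a 3x3 matrix (cyclic index formula, signs included) *)
Definition cof3 (m : nat -> nat -> R) (i j : nat) : R :=
  let i1 := ((i + 1) mod 3)%nat in let i2 := ((i + 2) mod 3)%nat in
  let j1 := ((j + 1) mod 3)%nat in let j2 := ((j + 2) mod 3)%nat in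
  m i1 j1 * m i2 j2 - m i1 j2 * m i2 j1.

Definition ginv (g : metric) (i j : nat) (p : pt) : R :=
  cof3 (fun a b => g a b p) j i / det3 (fun a b => g a b p).

Definition christoffel (g : metric) (k i j : nat) (p : pt) : R :=
  / 2 * sum3 (fun l => ginv g k l p *
     (pd i (g j l) p + pd j (g i l) p - pd l (g i j) p)).

Definition ricci (g : metric) (i j : nat) (p : pt) : R :=
  sum3 (fun k => pd k (christoffel g k i j) p)
  - sum3 (fun k => pd j (christoffel g k k i) p)
  + sum3 (fun k => sum3 (fun l => christoffel g k k l p * christoffel g l i j p))
  - sum3 (fun k => sum3 (fun l => christoffel g k j l p * christoffel g l k i p)).

Definition einstein_on (U : pt -> Prop) (g : metric) (lam : R) : Prop :=
  forall p, U p -> forall i j, (i < 3)%nat -> (j < 3)%nat ->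
    ricci g i j p = lam * g i j p.

(* the metric -dt^2 + b1(t)^2 dx^2 + b2(t)^2 dphi^2, coordinates (t,x,phi) *)
Definition mwp_metric (b1 b2 : R -> R) : metric :=
  fun i j p =>
    match i, j with
    | 0%nat, 0%nat => -1
    | 1%nat, 1%nat => (b1 (p 0%nat)) ^ 2
    | 2%nat, 2%nat => (b2 (p 0%nat)) ^ 2
    | _, _ => 0
    end.

Definition Fint (N : R -> R) (a r : R) : R := RInt (fun mu => / N mu) a r.

(* Main.v *)
Require Import Defs.
From Stdlib Require Import Reals Lra Arith Lia.
From Coquelicot Require Import Coquelicot.
Open Scope R_scope.
From Stdlib Require Import Lra Lia.

Definition pdT (i : nat) (H : R -> R) (t : R) : R :=
  if Nat.eqb i 0 then Derive H t else 0.

Lemma pd_t (i : nat) (h : pt -> R) (H : R -> R) (p : pt) :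
  (forall q, h q = H (q 0%nat)) -> pd i h p = pdT i H (p 0%nat).
Proof.
  intros Hh. unfold pd, pdT.
  destruct (Nat.eqb i 0) eqn:E.
  - apply Nat.eqb_eq in E; subst i.
    apply Derive_ext. intros s. rewrite Hh. reflexivity.
  - rewrite (Derive_ext _ (fun _ => H (p 0%nat))).
    + apply Derive_const.
    + intros s. rewrite Hh. unfold upd. rewrite Nat.eqb_sym, E. reflexivity.
Qed.

Definition Gm (b1 b2 : R -> R) (a b : nat) (t : R) : R :=
  mwp_metric b1 b2 a b (fun _ => t).

Definition ginvT b1 b2 (k l : nat) (t : R) : R :=
  cof3 (fun a b => Gm b1 b2 a b t) l k / det3 (fun a b => Gm b1 b2 a b t).

Definition ChrT b1 b2 (k i j : nat) (t : R) : R :=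
  / 2 * sum3 (fun l => ginvT b1 b2 k l t *
     (pdT i (Gm b1 b2 j l) t + pdT j (Gm b1 b2 i l) t - pdT l (Gm b1 b2 i j) t)).

Definition RicT b1 b2 (i j : nat) (t : R) : R :=
  sum3 (fun k => pdT k (ChrT b1 b2 k i j) t)
  - sum3 (fun k => pdT j (ChrT b1 b2 k k i) t)
  + sum3 (fun k => sum3 (fun l => ChrT b1 b2 k k l t * ChrT b1 b2 l i j t))
  - sum3 (fun k => sum3 (fun l => ChrT b1 b2 k j l t * ChrT b1 b2 l k i t)).

Lemma g_t b1 b2 a b q : mwp_metric b1 b2 a b q = Gm b1 b2 a b (q 0%nat).
Proof. reflexivity. Qed.

Lemma chr_t b1 b2 k i j q :
  christoffel (mwp_metric b1 b2) k i j q = ChrT b1 b2 k i j (q 0%nat).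
Proof.
  unfold christoffel, ChrT, sum3.
  rewrite !(pd_t _ _ (Gm b1 b2 _ _)) by (intros; apply g_t).
  reflexivity.
Qed.

Lemma ric_t b1 b2 i j q :
  ricci (mwp_metric b1 b2) i j q = RicT b1 b2 i j (q 0%nat).
Proof.
  unfold ricci, RicT, sum3.
  rewrite !(pd_t _ _ (ChrT b1 b2 _ _ _)) by (intros; apply chr_t).
  rewrite !chr_t. reflexivity.
Qed.

Lemma einstein_iff b1 b2 lo hi lam :
  einstein_on (fun p : pt => in_oint lo hi (p 0%nat)) (mwp_metric b1 b2) lam <->
  (forall t, in_oint lo hi t -> forall i j, (i < 3)%nat -> (j < 3)%nat ->
     RicT b1 b2 i j t = lam * Gm b1 b2 i j t).
Proof.
  unfold einstein_on. split.
  - intros H t Ht i j Hi Hj.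
    specialize (H (fun _ => t) Ht i j Hi Hj). rewrite ric_t, g_t in H. exact H.
  - intros H p Hp i j Hi Hj. rewrite ric_t, g_t. apply H; auto.
Qed.

Lemma oint_conv lo hi x y z :
  in_oint lo hi x -> in_oint lo hi y -> x <= z <= y -> in_oint lo hi z.
Proof.
  unfold in_oint; destruct lo, hi; simpl; intros; lra.
Qed.

Lemma oint_loc lo hi x : in_oint lo hi x -> locally x (in_oint lo hi).
Proof.
  intros H.
  assert (Ho : open (fun u : R => Rbar_lt lo u /\ Rbar_lt u hi)).
  { apply open_and. apply open_Rbar_gt. apply open_Rbar_lt. }
  apply Ho. exact H.
Qed.

Lemma deriv_eq (g : R -> R) (t l l' : R) : is_derive g t l -> l = l' -> is_derive g t l'.
Proof. intros H ->; exact H. Qed.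

Definition DG (f : R -> R) (a b : nat) (t : R) : R :=
  match a, b with
  | 1%nat, 1%nat => 2 * Derive f t * Derive (Derive f) t
  | 2%nat, 2%nat => 2 * f t * Derive f t
  | _, _ => 0 end.

Definition Ef (f : R -> R) (k i j : nat) (t : R) : R :=
  match k, i, j with
  | 0%nat, 1%nat, 1%nat => Derive f t * Derive (Derive f) t
  | 0%nat, 2%nat, 2%nat => f t * Derive f t
  | 1%nat, 0%nat, 1%nat | 1%nat, 1%nat, 0%nat => Derive (Derive f) t / Derive f t
  | 2%nat, 0%nat, 2%nat | 2%nat, 2%nat, 0%nat => Derive f t / f t
  | _, _, _ => 0 end.

Definition DEf (f : R -> R) (k i j : nat) (t : R) : R :=
  match k, i, j with
  | 0%nat, 1%nat, 1%nat => Derive (Derive f) t ^ 2 + Derive f t * Derive (Derive (Derive f)) t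
  | 0%nat, 2%nat, 2%nat => Derive f t ^ 2 + f t * Derive (Derive f) t
  | 1%nat, 0%nat, 1%nat | 1%nat, 1%nat, 0%nat =>
      (Derive (Derive (Derive f)) t * Derive f t - Derive (Derive f) t ^ 2) / Derive f t ^ 2
  | 2%nat, 0%nat, 2%nat | 2%nat, 2%nat, 0%nat =>
      (Derive (Derive f) t * f t - Derive f t ^ 2) / f t ^ 2
  | _, _, _ => 0 end.

Ltac cases3 k := destruct k as [|[|[|k]]]; [ | | | exfalso; lia].

Lemma DGm (N f : R -> R) lo hi t :
  (forall s, in_oint lo hi s -> N (f s) = Derive f s) ->
  (forall s, in_oint lo hi s -> ex_derive f s /\ ex_derive (Derive f) s) ->
  in_oint lo hi t ->
  forall a b, (a < 3)%nat -> (b < 3)%nat ->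
  Derive (Gm (fun t => N (f t)) (fun t => f t) a b) t = DG f a b t.
Proof.
  intros HN Hs Ht a b Ha Hb.
  destruct (Hs t Ht) as [E1 E2].
  cases3 a; cases3 b; unfold DG.
  all: apply is_derive_unique; unfold Gm, mwp_metric; simpl.
  all: try solve [auto_derive; auto; ring].
  - apply (is_derive_ext_loc (fun s => Derive f s * (Derive f s * 1))).
    + generalize (oint_loc _ _ _ Ht). apply filter_imp. intros s Hs'.
      rewrite HN; auto.
    + auto_derive. repeat split; exact E2. change (fun x : R => Derive f x) with (Derive f). ring.
  - auto_derive. repeat split; exact E1. change (fun x : R => f x) with f. ring.
Qed.

Lemma Chr_E (N f : R -> R) lo hi t :
  (forall s, in_oint lo hi s -> N (f s) = Derive f s) ->
  (forall s, in_oint lo hi s -> ex_derive f s /\ ex_derive (Derive f) s) ->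
  (forall s, in_oint lo hi s -> 0 < f s /\ 0 < Derive f s) ->
  in_oint lo hi t ->
  forall k i j, (k < 3)%nat -> (i < 3)%nat -> (j < 3)%nat ->
  ChrT (fun t => N (f t)) (fun t => f t) k i j t = Ef f k i j t.
Proof.
  intros HN Hs Hp Ht k i j Hk Hi Hj.
  destruct (Hp t Ht) as [P1 P2].
  cases3 k; cases3 i; cases3 j;
  unfold ChrT, sum3, pdT; cbn [Nat.eqb];
  rewrite ?(DGm N f lo hi t HN Hs Ht) by lia;
  unfold ginvT, cof3, det3, Gm, mwp_metric, DG, Ef; simpl;
  rewrite ?HN by exact Ht; field; lra.
Qed.

Lemma DChr (N f : R -> R) lo hi t :
  (forall s, in_oint lo hi s -> N (f s) = Derive f s) ->
  (forall s, in_oint lo hi s -> ex_derive f s /\ ex_derive (Derive f) s) ->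
  (forall s, in_oint lo hi s -> ex_derive (Derive (Derive f)) s) ->
  (forall s, in_oint lo hi s -> 0 < f s /\ 0 < Derive f s) ->
  in_oint lo hi t ->
  forall k i j, (k < 3)%nat -> (i < 3)%nat -> (j < 3)%nat ->
  Derive (ChrT (fun t => N (f t)) (fun t => f t) k i j) t = DEf f k i j t.
Proof.
  intros HN Hs Hs3 Hp Ht k i j Hk Hi Hj.
  rewrite (Derive_ext_loc _ (Ef f k i j)).
  2:{ generalize (oint_loc _ _ _ Ht). apply filter_imp. intros s Hs'.
      apply (Chr_E N f lo hi); auto. }
  destruct (Hp t Ht) as [P1 P2]. destruct (Hs t Ht) as [E1 E2].
  specialize (Hs3 t Ht).
  apply is_derive_unique.
  cases3 k; cases3 i; cases3 j; unfold Ef, DEf;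
  try solve [auto_derive; auto].
  all: auto_derive; [repeat split; auto; lra | ];
    change (fun x : R => Derive (Derive f) x) with (Derive (Derive f));
    change (fun x : R => Derive f x) with (Derive f);
    change (fun x : R => f x) with f; field; lra.
Qed.

Definition RicX (f : R -> R) (i j : nat) (t : R) : R :=
  match i, j with
  | 0%nat, 0%nat => - (Derive (Derive (Derive f)) t / Derive f t + Derive (Derive f) t / f t)
  | 1%nat, 1%nat => Derive f t * Derive (Derive (Derive f)) t
                    + Derive f t ^ 2 * Derive (Derive f) t / f t
  | 2%nat, 2%nat => 2 * f t * Derive (Derive f) t
  | _, _ => 0 end.

Lemma Ric_X (N f : R -> R) lo hi t :
  (forall s, in_oint lo hi s -> N (f s) = Derive f s) ->
  (forall s, in_oint lo hi s -> ex_derive f s /\ ex_derive (Derive f) s) ->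
  (forall s, in_oint lo hi s -> ex_derive (Derive (Derive f)) s) ->
  (forall s, in_oint lo hi s -> 0 < f s /\ 0 < Derive f s) ->
  in_oint lo hi t ->
  forall i j, (i < 3)%nat -> (j < 3)%nat ->
  RicT (fun t => N (f t)) (fun t => f t) i j t = RicX f i j t.
Proof.
  intros HN Hs Hs3 Hp Ht i j Hi Hj.
  destruct (Hp t Ht) as [P1 P2].
  cases3 i; cases3 j;
  unfold RicT, sum3, pdT; cbn [Nat.eqb];
  rewrite ?(DChr N f lo hi t HN Hs Hs3 Hp Ht) by lia;
  rewrite ?(Chr_E N f lo hi t HN Hs Hp Ht) by lia;
  unfold Ef, DEf, RicX; field; lra.
Qed.

Lemma oint_minmax lo hi x y z :
  in_oint lo hi x -> in_oint lo hi y -> Rmin x y <= z <= Rmax x y -> in_oint lo hi z.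
Proof.
  intros Hx Hy Hz. unfold Rmin, Rmax in Hz.
  destruct (Rle_dec x y).
  - apply (oint_conv lo hi x y); auto.
  - apply (oint_conv lo hi y x); auto; lra.
Qed.

Lemma deriv_inv (rlo rhi tlo thi : Rbar) (N : R -> R) (a : R) (Finv : R -> R) :
  smooth_on (in_oint rlo rhi) N ->
  (forall r, in_oint rlo rhi r -> 0 < N r) ->
  in_oint rlo rhi a ->
  (forall t, in_oint tlo thi t ->
     in_oint rlo rhi (Finv t) /\ Fint N a (Finv t) = t) ->
  smooth_on (in_oint tlo thi) Finv ->
  forall t, in_oint tlo thi t -> N (Finv t) = Derive Finv t.
Proof.
  intros HsN HNp Ha Hinv HsF t Ht.
  destruct (Hinv t Ht) as [Hr _].
  set (r := Finv t) in *.
  assert (Hcont : forall z, in_oint rlo rhi z -> continuous (fun mu => / N mu) z).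
  { intros z Hz. apply continuous_Rinv_comp.
    - exact (ex_derive_continuous N z (HsN 1%nat z Hz)).
    - specialize (HNp z Hz). lra. }
  assert (HF : is_derive (Fint N a) r (/ N r)).
  { unfold Fint. apply (is_derive_RInt (fun mu => / N mu) (RInt (fun mu => / N mu) a) a r).
    - generalize (oint_loc _ _ _ Hr). apply filter_imp. intros b Hb.
      apply (RInt_correct (V:=R_CompleteNormedModule)). apply (ex_RInt_continuous (V:=R_CompleteNormedModule)). intros z Hz.
      apply Hcont. apply (oint_minmax rlo rhi a b); auto.
    - apply Hcont; auto. }
  assert (Hf : is_derive Finv t (Derive Finv t)).
  { apply Derive_correct. exact (HsF 1%nat t Ht). }
  assert (Hc := is_derive_comp _ _ _ _ _ HF Hf).
  assert (Hid : is_derive (fun s => Fint N a (Finv s)) t 1).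
  { apply (is_derive_ext_loc (fun s => s)).
    - generalize (oint_loc _ _ _ Ht). apply filter_imp. intros s Hs.
      destruct (Hinv s Hs) as [_ E]. auto.
    - apply (deriv_eq (fun s => s) t 1 1); [|reflexivity]. auto_derive; auto. }
  apply is_derive_unique in Hc. apply is_derive_unique in Hid.
  rewrite Hid in Hc. unfold scal in Hc; simpl in Hc; unfold mult in Hc; simpl in Hc.
  specialize (HNp r Hr).
  apply (f_equal (fun x => x * N r)) in Hc.
  field_simplify in Hc; lra.
Qed.

Lemma ein_d2 (N f : R -> R) lo hi lam :
  (forall s, in_oint lo hi s -> N (f s) = Derive f s) ->
  (forall s, in_oint lo hi s -> ex_derive f s /\ ex_derive (Derive f) s) ->
  (forall s, in_oint lo hi s -> ex_derive (Derive (Derive f)) s) ->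
  (forall s, in_oint lo hi s -> 0 < f s /\ 0 < Derive f s) ->
  (forall t, in_oint lo hi t -> forall i j, (i < 3)%nat -> (j < 3)%nat ->
     RicT (fun t => N (f t)) (fun t => f t) i j t = lam * Gm (fun t => N (f t)) (fun t => f t) i j t)
  <-> (forall t, in_oint lo hi t -> Derive (Derive f) t = lam / 2 * f t).
Proof.
  intros HN Hs Hs3 Hp. split.
  - intros H t Ht. specialize (H t Ht 2%nat 2%nat ltac:(lia) ltac:(lia)).
    rewrite (Ric_X N f lo hi t HN Hs Hs3 Hp Ht) in H by lia.
    unfold RicX, Gm, mwp_metric in H. simpl in H.
    destruct (Hp t Ht) as [P1 P2].
    nra.
  - intros H t Ht i j Hi Hj.
    assert (H3 : Derive (Derive (Derive f)) t = lam / 2 * Derive f t).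
    { rewrite (Derive_ext_loc _ (fun s => lam / 2 * f s)).
      - apply is_derive_unique. auto_derive. apply (Hs t Ht).
        change (fun x : R => f x) with f. ring.
      - generalize (oint_loc _ _ _ Ht). apply filter_imp. intros s Hs'. auto. }
    rewrite (Ric_X N f lo hi t HN Hs Hs3 Hp Ht) by lia.
    destruct (Hp t Ht) as [P1 P2].
    cases3 i; cases3 j; unfold RicX, Gm, mwp_metric; simpl;
      rewrite ?H3, ?H, ?HN by exact Ht; try field; lra.
Qed.

Lemma const_on (h : R -> R) lo hi :
  (forall s, in_oint lo hi s -> is_derive h s 0) ->
  forall x y, in_oint lo hi x -> in_oint lo hi y -> h x = h y.
Proof.
  intros Hd x y Hx Hy.
  destruct (MVT_gen h x y (fun _ => 0)) as [c [_ Hc]].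
  - intros z Hz. apply Hd. apply (oint_minmax lo hi x y); auto; lra.
  - intros z Hz. apply derivable_continuous_pt. exists 0.
    apply is_derive_Reals. apply Hd. apply (oint_minmax lo hi x y); auto.
  - lra.
Qed.

Theorem proposition6p1
  (rlo rhi : Rbar) (N : R -> R) (a : R)
  (tlo thi : Rbar) (Finv : R -> R) (lam : R) :
  smooth_on (in_oint rlo rhi) N ->
  (forall r, in_oint rlo rhi r -> 0 < N r) ->
  in_oint rlo rhi a ->
  (* Finv : I -> J is the (smooth) inverse of F : J -> I *)
  (forall r, in_oint rlo rhi r ->
     in_oint tlo thi (Fint N a r) /\ Finv (Fint N a r) = r) ->
  (forall t, in_oint tlo thi t ->
     in_oint rlo rhi (Finv t) /\ Fint N a (Finv t) = t) ->
  smooth_on (in_oint tlo thi) Finv ->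
  (* b2 > 0 *)
  (forall t, in_oint tlo thi t -> 0 < Finv t) ->
  (einstein_on (fun p : pt => in_oint tlo thi (p 0%nat))
     (mwp_metric (fun t => N (Finv t)) (fun t => Finv t)) lam
   <->
   exists c2 : R, forall r, in_oint rlo rhi r -> (N r) ^ 2 = lam / 2 * r ^ 2 + c2).
Proof.
  intros HsN HNp Ha HF Hinv HsF Hpos.
  assert (HN := deriv_inv rlo rhi tlo thi N a Finv HsN HNp Ha Hinv HsF).
  assert (Hs : forall s, in_oint tlo thi s -> ex_derive Finv s /\ ex_derive (Derive Finv) s).
  { intros s Hs. split. exact (HsF 1%nat s Hs). exact (HsF 2%nat s Hs). }
  assert (Hs3 : forall s, in_oint tlo thi s -> ex_derive (Derive (Derive Finv)) s).
  { intros s Hs'. exact (HsF 3%nat s Hs'). }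
  assert (Hp : forall s, in_oint tlo thi s -> 0 < Finv s /\ 0 < Derive Finv s).
  { intros s Hs'. split. auto. rewrite <- HN by auto. apply HNp. apply Hinv; auto. }
  rewrite einstein_iff, (ein_d2 N Finv tlo thi lam HN Hs Hs3 Hp).
  split.
  - intros H.
    set (h := fun s => Derive Finv s ^ 2 - lam / 2 * Finv s ^ 2).
    assert (Hh : forall s, in_oint tlo thi s -> is_derive h s 0).
    { intros s Hs'. unfold h. auto_derive.
      - destruct (Hs s Hs'); repeat split; auto.
      - change (fun x : R => Derive Finv x) with (Derive Finv).
        change (fun x : R => Finv x) with Finv. rewrite H by auto. ring. }
    destruct (HF a Ha) as [Ht0 _].
    exists (h (Fint N a a)).
    intros r Hr. destruct (HF r Hr) as [Ht Er].
    rewrite (const_on h tlo thi Hh (Fint N a a) (Fint N a r)) by auto.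
    unfold h. rewrite <- HN by auto. rewrite Er. ring.
  - intros [c2 Hc] t Ht.
    destruct (Hp t Ht) as [P1 P2].
    assert (E : forall s, in_oint tlo thi s ->
                Derive Finv s ^ 2 = lam / 2 * Finv s ^ 2 + c2).
    { intros s Hs'. rewrite <- HN by auto. apply Hc. apply Hinv; auto. }
    assert (D1 : is_derive (fun s => Derive Finv s ^ 2) t
                   (2 * Derive Finv t * Derive (Derive Finv) t)).
    { auto_derive. destruct (Hs t Ht); repeat split; auto.
      change (fun x : R => Derive Finv x) with (Derive Finv). ring. }
    assert (D2 : is_derive (fun s => lam / 2 * Finv s ^ 2 + c2) t
                   (lam * Finv t * Derive Finv t)).
    { auto_derive. destruct (Hs t Ht); repeat split; auto.
      change (fun x : R => Finv x) with Finv. field. }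
    assert (D1' : is_derive (fun s => lam / 2 * Finv s ^ 2 + c2) t
                   (2 * Derive Finv t * Derive (Derive Finv) t)).
    { apply (is_derive_ext_loc _ _ _ _ (filter_imp _ _ (fun s Hs' => E s Hs') (oint_loc _ _ _ Ht)) D1). }
    apply is_derive_unique in D1'. apply is_derive_unique in D2.
    rewrite D1' in D2.
    apply (f_equal (fun x => x / (2 * Derive Finv t))) in D2.
    field_simplify in D2; try lra.
Qed.
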